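(* Let $S$ be a localizable left Ore set in a ring $R$. Then there exists a pair $(Q,f)$, with $Q$ a ring and $f:R\to Q$ a ring homomorphism, such that (i) $f(s)$ is a unit of $Q$ for all $s\in S$, and for every pair $(Q',f')$ satisfying (i) there is a unique ring homomorphism $h:Q\to Q'$ with $f'=hf$. The ring $Q$ is unique up to isomorphism, and $Q$ is isomorphic to the left localization of $R/\mathfrak p(S)$ at $\pi(S)$, where $\pi:R\to R/\mathfrak p(S)$ is the canonical map and $\pi(S)$ is a left denominator set of $R/\mathfrak p(S)$ with $\mathrm{ass}(\pi(S))=0$.
   Context: Rings are associative with $1$. A multiplicatively closed subset $S$ ($1\in S$, $0\notin S$) is a left Ore set if $Sr\cap Rs\ne\emptyset$ for all $r\in R,s\in S$; it is a left denominator set if moreover $rs=0$ ($s\in S$) implies $tr=0$ for some $t\in S$; $\mathrm{ass}(S):=\{r\mid sr=0\text{ for some }s\in S\}$. A left Ore set $S$ is localizable if there is a ring homomorphism $\varphi:R\to R'$ to a nonzero ring $R'$ with $\varphi(s)$ a unit for all $s\in S$. For a ring $B$ and $T\subseteq B$, $\mathrm{ass}_l(T,B):=\{b\mid tb=0\text{ for some }t\in T\}$, $\mathrm{ass}_r(T,B):=\{b\mid bt=0\text{ for some }t\in T\}$. Define ideals $\mathfrak p_\alpha$ ($\alpha\ge1$ ordinals): $\mathfrak p_1:=\mathrm{ass}_l(S,R)+\mathrm{ass}_r(S,R)R$; $\mathfrak p_{\alpha+1}:=\pi_\alpha^{-1}(\mathrm{ass}_l(\pi_\alpha(S),R/\mathfrak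 p_\alpha)+\mathrm{ass}_r(\pi_\alpha(S),R/\mathfrak p_\alpha)\cdot(R/\mathfrak p_\alpha))$ with $\pi_\alpha:R\to R/\mathfrak p_\alpha$ canonical; $\mathfrak p_\alpha:=\bigcup_{\beta<\alpha}\mathfrak p_\beta$ for limit $\alpha$; $\mathfrak p(S):=\bigcup_\alpha\mathfrak p_\alpha$. *)

(* Defs.v *)
From HB Require Import structures.
From mathcomp Require Import all_boot all_order all_algebra.
Set Implicit Arguments. Unset Strict Implicit. Unset Printing Implicit Defensive.
Import GRing.Theory.
Local Open Scope ring_scope.

Section Defs.
Variable R : pzRingType.

Definition is_unit (x : R) : Prop := exists y : R, x * y = 1 /\ y * x = 1.

Definition mult_closed (S : R -> Prop) : Prop :=
  S 1 /\ ~ S 0 /\ (forall s t, S s -> S t -> S (s * t)).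

Definition left_ore (S : R -> Prop) : Prop :=
  mult_closed S /\
  (forall (r s : R), S s -> exists (s' r' : R), S s' /\ s' * r = r' * s).

Definition left_denominator (S : R -> Prop) : Prop :=
  left_ore S /\
  (forall (r s : R), S s -> r * s = 0 -> exists t, S t /\ t * r = 0).

Definition ass (S : R -> Prop) (r : R) : Prop := exists s, S s /\ s * r = 0.

(* The ideal p(S) := union over ordinals alpha >= 1 of p_alpha.
   Unfolding the quotient R/p_alpha: r \in p_(alpha+1) iff
   r = a + \sum_i b_i x_i  with  s a \in p_alpha (or s a = 0 at stage 0)
   and b_i s_i \in p_alpha (or = 0 at stage 0) for some s, s_i \in S.
   The transfinite union of this increasing chain is the least fixed point,
   represented here by an inductive predicate. *)
Inductive pS (S : R -> Prop) : R -> Prop :=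
  | pS_intro (r a : R) (l : seq (R * R)) :
      (exists s, S s /\ (s * a = 0 \/ pS S (s * a))) ->
      (forall bx, bx \in l -> exists s, S s /\ (bx.1 * s = 0 \/ pS S (bx.1 * s))) ->
      r = a + \sum_(bx <- l) bx.1 * bx.2 ->
      pS S r.

End Defs.

Definition inverts (R Q : pzRingType) (S : R -> Prop) (f : {rmorphism R -> Q}) :=
  forall s, S s -> is_unit (f s).

Definition localizable (R : pzRingType) (S : R -> Prop) : Prop :=
  exists (R' : nzRingType) (phi : {rmorphism R -> R'}), inverts S phi.

Definition universal_inverting (R Q : pzRingType) (S : R -> Prop)
    (f : {rmorphism R -> Q}) : Prop :=
  forall (Q' : pzRingType) (f' : {rmorphism R -> Q'}), inverts S f' ->
    exists h : {rmorphism Q -> Q'},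
      (forall r, f' r = h (f r)) /\
      (forall h' : {rmorphism Q -> Q'}, (forall r, f' r = h' (f r)) -> forall q, h' q = h q).

Definition ring_iso (A B : pzRingType) : Prop :=
  exists h : {rmorphism A -> B}, bijective h.

(* pi : R -> A is (up to iso) the canonical map R -> R/I: surjective with kernel I *)
Definition quotient_map (R A : pzRingType) (pi : {rmorphism R -> A}) (I : R -> Prop) :=
  (forall a : A, exists r, pi r = a) /\ (forall r, pi r = 0 <-> I r).

Definition image_p (R A : pzRingType) (pi : {rmorphism R -> A}) (S : R -> Prop) : A -> Prop :=
  fun x => exists s, S s /\ pi s = x.

(* sigma : A -> L is a left localization (left ring of fractions) of A at T
   (Goodearl-Warfield style definition): sigma(t) units, every element is
   sigma(t)^{-1} sigma(a), and ker sigma = ass(T). *)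
Definition is_left_localization (A L : pzRingType) (T : A -> Prop)
    (sigma : {rmorphism A -> L}) : Prop :=
  (forall t, T t -> is_unit (sigma t)) /\
  (forall q : L, exists (t a : A) (u : L),
      T t /\ u * sigma t = 1 /\ sigma t * u = 1 /\ q = u * sigma a) /\
  (forall a, sigma a = 0 <-> ass T a).

(* Main.v *)
Require Import Defs.
From HB Require Import structures.
From mathcomp Require Import all_boot all_order all_algebra.
From mathcomp Require Import boolp.
Set Implicit Arguments. Unset Strict Implicit. Unset Printing Implicit Defensive.
Import GRing.Theory.
Local Open Scope ring_scope.

Record setoid_ring (X : Type) (E : X -> X -> Prop) (z o : X) (opp : X -> X)
  (add mul : X -> X -> X) : Prop := SetoidRing {
  sr_refl : forall x, E x x;
  sr_sym : forall x y, E x y -> E y x;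
  sr_trans : forall x y w, E x y -> E y w -> E x w;
  sr_addE : forall x x' y y', E x x' -> E y y' -> E (add x y) (add x' y');
  sr_oppE : forall x x', E x x' -> E (opp x) (opp x');
  sr_mulE : forall x x' y y', E x x' -> E y y' -> E (mul x y) (mul x' y');
  sr_addA : forall x y w, E (add x (add y w)) (add (add x y) w);
  sr_addC : forall x y, E (add x y) (add y x);
  sr_add0 : forall x, E (add z x) x;
  sr_addN : forall x, E (add (opp x) x) z;
  sr_mulA : forall x y w, E (mul x (mul y w)) (mul (mul x y) w);
  sr_mul1l : forall x, E (mul o x) x;
  sr_mul1r : forall x, E (mul x o) x;
  sr_mulDl : forall x y w, E (mul (add x y) w) (add (mul x w) (mul y w));
  sr_mulDr : forall x y w, E (mul x (add y w)) (add (mul x y) (mul x w))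
}.

Section SQ.
Variables (X : Type) (E : X -> X -> Prop) (z o : X) (opp : X -> X) (add mul : X -> X -> X).
Variable H : setoid_ring E z o opp add mul.

Definition SQ : Type :=
  (fun _ : setoid_ring E z o opp add mul => {P : X -> Prop | exists x, P = E x}) H.

Definition cls (x : X) : SQ := exist _ (E x) (ex_intro _ x erefl).
Definition rep (q : SQ) : X := projT1 (cid (proj2_sig q)).

Lemma repK q : cls (rep q) = q.
Proof.
case: q => P HP; rewrite /rep /cls /=.
case: (cid HP) => x /= ex; move: HP; rewrite ex => HP.
by rewrite (Prop_irrelevance HP (ex_intro _ x erefl)).
Qed.

Lemma eq_sigP (P1 P2 : X -> Prop) (h1 : exists x, P1 = E x) (h2 : exists x, P2 = E x) :
  P1 = P2 -> exist (fun P => exists x, P = E x) P1 h1 = exist _ P2 h2.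
Proof. by move=> e; subst; congr exist; apply: Prop_irrelevance. Qed.

Lemma eq_cls x y : cls x = cls y <-> E x y.
Proof.
split=> [e|exy].
  have : E x = E y by move/(congr1 (@proj1_sig _ _)): e.
  by move=> ->; apply: (sr_refl H).
rewrite /cls; suff ee : E x = E y.
  exact: eq_sigP.
apply: funext => w; apply: propext; split => h.
  exact: (sr_trans H (sr_sym H exy) h).
exact: (sr_trans H exy h).
Qed.

Lemma rep_cls x : E (rep (cls x)) x.
Proof. by apply/eq_cls; rewrite repK. Qed.

Lemma clsP (P : SQ -> Prop) : (forall x, P (cls x)) -> forall q, P q.
Proof. by move=> h q; rewrite -(repK q). Qed.

HB.instance Definition _ := gen_eqMixin SQ.
HB.instance Definition _ := gen_choiceMixin SQ.

Definition qzero : SQ := cls z.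
Definition qone : SQ := cls o.
Definition qopp (p : SQ) : SQ := cls (opp (rep p)).
Definition qadd (p q : SQ) : SQ := cls (add (rep p) (rep q)).
Definition qmul (p q : SQ) : SQ := cls (mul (rep p) (rep q)).

Lemma qoppE x : qopp (cls x) = cls (opp x).
Proof. by apply/eq_cls; apply: (sr_oppE H); apply: rep_cls. Qed.
Lemma qaddE x y : qadd (cls x) (cls y) = cls (add x y).
Proof. by apply/eq_cls; apply: (sr_addE H); apply: rep_cls. Qed.
Lemma qmulE x y : qmul (cls x) (cls y) = cls (mul x y).
Proof. by apply/eq_cls; apply: (sr_mulE H); apply: rep_cls. Qed.

Lemma qaddA : associative qadd.
Proof.
elim/clsP=> x; elim/clsP=> y; elim/clsP=> w.
by rewrite !qaddE; apply/eq_cls; apply: (sr_addA H).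
Qed.
Lemma qaddC : commutative qadd.
Proof. by elim/clsP=> x; elim/clsP=> y; rewrite !qaddE; apply/eq_cls; apply: (sr_addC H). Qed.
Lemma qadd0 : left_id qzero qadd.
Proof. by elim/clsP=> x; rewrite qaddE; apply/eq_cls; apply: (sr_add0 H). Qed.
Lemma qaddN : left_inverse qzero qopp qadd.
Proof. by elim/clsP=> x; rewrite qoppE qaddE; apply/eq_cls; apply: (sr_addN H). Qed.

HB.instance Definition _ := GRing.isZmodule.Build SQ qaddA qaddC qadd0 qaddN.

Lemma qmulA : associative qmul.
Proof.
elim/clsP=> x; elim/clsP=> y; elim/clsP=> w.
by rewrite !qmulE; apply/eq_cls; apply: (sr_mulA H).
Qed.
Lemma qmul1l : left_id qone qmul.
Proof. by elim/clsP=> x; rewrite qmulE; apply/eq_cls; apply: (sr_mul1l H). Qed.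
Lemma qmul1r : right_id qone qmul.
Proof. by elim/clsP=> x; rewrite qmulE; apply/eq_cls; apply: (sr_mul1r H). Qed.
Lemma cls_add x y : cls x + cls y = cls (add x y) :> SQ.
Proof. exact: qaddE. Qed.
Lemma qmulDl : left_distributive qmul (@GRing.add SQ).
Proof.
elim/clsP=> x; elim/clsP=> y; elim/clsP=> w.
rewrite -[cls x + cls y]/(qadd _ _) qaddE !qmulE -[_ + _]/(qadd _ _) qaddE; apply/eq_cls; apply: (sr_mulDl H).
Qed.
Lemma qmulDr : right_distributive qmul (@GRing.add SQ).
Proof.
elim/clsP=> x; elim/clsP=> y; elim/clsP=> w.
by rewrite -[cls y + cls w]/(qadd _ _) qaddE !qmulE -[_ + _]/(qadd _ _) qaddE; apply/eq_cls; apply: (sr_mulDr H).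
Qed.

HB.instance Definition _ := GRing.Zmodule_isPzRing.Build SQ qmulA qmul1l qmul1r qmulDl qmulDr.

Lemma cls_opp x : - cls x = cls (opp x) :> SQ.
Proof. exact: qoppE. Qed.
Lemma cls_mul x y : cls x * cls y = cls (mul x y) :> SQ.
Proof. exact: qmulE. Qed.
Lemma cls_zero : 0 = cls z :> SQ. Proof. by []. Qed.
Lemma cls_one : 1 = cls o :> SQ. Proof. by []. Qed.

End SQ.

Section MkRM.
Variables (A B : pzRingType) (f : A -> B).
Variable H : (f 0 = 0 /\ {morph f : x y / x + y}) /\ (f 1 = 1 /\ {morph f : x y / x * y}).
Definition mkrm_f := (fun _ : (f 0 = 0 /\ {morph f : x y / x + y}) /\ (f 1 = 1 /\ {morph f : x y / x * y}) => f) H.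
HB.instance Definition _ := GRing.isNmodMorphism.Build A B mkrm_f
  (proj1 (proj1 H), proj2 (proj1 H)).
HB.instance Definition _ := GRing.isMonoidMorphism.Build A B mkrm_f
  (proj1 (proj2 H), proj2 (proj2 H)).
Definition mkrm : {rmorphism A -> B} := mkrm_f.
Lemma mkrmE x : mkrm x = f x. Proof. by []. Qed.
End MkRM.


Section PSideal.
Variables (R : pzRingType) (S : R -> Prop) (HS : left_ore S).

Lemma S1 : S 1. Proof. by case: HS => [[]]. Qed.
Lemma SM s t : S s -> S t -> S (s * t). Proof. by case: HS => [[_ [_ h]]] _; apply: h. Qed.
Lemma Sore r s : S s -> exists s' r', S s' /\ s' * r = r' * s.
Proof. by case: HS => _ h; apply: h. Qed.

Fixpoint L (n : nat) (r : R) : Prop :=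
  match n with
  | 0 => r = 0
  | n'.+1 => exists a (l : seq (R * R)),
      (exists s, S s /\ L n' (s * a)) /\
      (forall bx, bx \in l -> exists s, S s /\ L n' (bx.1 * s)) /\
      r = a + \sum_(bx <- l) bx.1 * bx.2
  end.

Lemma L_S n r : L n r -> L n.+1 r.
Proof.
elim: n r => [|n IH] r /=.
  move=> ->; exists 0, [::]; split; first by exists 1; split; [exact: S1|rewrite mulr0].
  by split=> //; rewrite big_nil addr0.
move=> [a [l [[s [Ss Ha]] [Hl e]]]]; exists a, l; split; first by exists s; split=> //; apply: IH.
split=> // bx /Hl [s0 [Ss0 h]]; exists s0; split=> //; exact: IH.
Qed.

Lemma L_le n m r : (n <= m)%N -> L n r -> L m r.
Proof.
move=> /subnKC <-; elim: (m - n)%N => [|k IH]; first by rewrite addn0.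
by move=> h; rewrite addnS; apply: L_S; apply: IH.
Qed.

Lemma L0 n : L n 0.
Proof. by apply: (@L_le 0) => //. Qed.

Lemma L_mull n r x : L n r -> L n (x * r).
Proof.
elim: n r x => [|n IH] r x /=; first by move=> ->; rewrite mulr0.
move=> [a [l [[s [Ss Ha]] [Hl e]]]].
exists (x * a), [seq (x * bx.1, bx.2) | bx <- l]; split.
  have [s' [x' [Ss' e']]] := Sore x Ss.
  exists s'; split=> //; rewrite mulrA e' -mulrA; exact: IH.
split.
  move=> bx /mapP [[b y] Hb ->] /=.
  have [s0 [Ss0 h]] := Hl _ Hb; exists s0; split=> //; rewrite -mulrA; exact: IH.
by rewrite e mulrDr big_map big_distrr /=; congr (_ + _); apply: eq_bigr => i _; rewrite mulrA.
Qed.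

Lemma L_mulr n r y : L n r -> L n (r * y).
Proof.
elim: n r y => [|n IH] r y /=; first by move=> ->; rewrite mul0r.
move=> [a [l [[s [Ss Ha]] [Hl e]]]].
exists (a * y), [seq (bx.1, bx.2 * y) | bx <- l]; split.
  exists s; split=> //; rewrite mulrA; exact: IH.
split.
  by move=> bx /mapP [[b z] Hb ->] /=; apply: Hl Hb.
by rewrite e mulrDl big_map big_distrl /=; congr (_ + _); apply: eq_bigr => i _; rewrite mulrA.
Qed.

Lemma L_add n r r' : L n r -> L n r' -> L n (r + r').
Proof.
elim: n r r' => [|n IH] r r' /=; first by move=> -> ->; rewrite addr0.
move=> [a [l [[s [Ss Ha]] [Hl e]]]] [a' [l' [[s' [Ss' Ha']] [Hl' e']]]].
exists (a + a'), (l ++ l'); split.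
  have [u [v [Su euv]]] := Sore s Ss'.
  exists (u * s); split; first exact: SM.
  rewrite mulrDr -mulrA euv -mulrA; apply: IH; exact: L_mull.
split.
  by move=> bx; rewrite mem_cat => /orP [/Hl|/Hl'].
by rewrite e e' big_cat /= addrACA.
Qed.

Lemma L_opp n r : L n r -> L n (- r).
Proof. by move=> h; rewrite -mulN1r; apply: L_mull. Qed.

Lemma pS_ind2 (P : R -> Prop) :
  (forall r a (l : seq (R * R)),
     (exists s, S s /\ (s * a = 0 \/ P (s * a))) ->
     (forall bx, bx \in l -> exists s, S s /\ (bx.1 * s = 0 \/ P (bx.1 * s))) ->
     r = a + \sum_(bx <- l) bx.1 * bx.2 -> P r) ->
  forall r, pS S r -> P r.
Proof.
move=> IHc; fix IH 2; move=> r [r0 a l Ha Hl e]; apply: (IHc r0 a l _ _ e).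
  case: Ha => s [Ss [h|h]]; exists s; split=> //; [by left|right; exact: IH _ h].
move=> bx Hb; case: (Hl bx Hb) => s [Ss [h|h]]; exists s; split=> //; [by left|right; exact: IH _ h].
Qed.

Lemma bound_list (Q : nat -> R * R -> Prop) (l : seq (R * R)) :
  (forall n m x, (n <= m)%N -> Q n x -> Q m x) ->
  (forall bx, bx \in l -> exists n, Q n bx) -> exists N, forall bx, bx \in l -> Q N bx.
Proof.
move=> mono; elim: l => [|x l IH] h; first by exists 0%N.
have [n Hn] := h x (mem_head _ _).
have [N HN] : exists N, forall bx, bx \in l -> Q N bx.
  by apply: IH => bx Hb; apply: h; rewrite in_cons Hb orbT.
exists (maxn n N) => bx; rewrite in_cons => /orP [/eqP ->|Hb].
  by apply: mono Hn; apply: leq_maxl.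
by apply: mono (HN _ Hb); apply: leq_maxr.
Qed.

Lemma pS_L r : pS S r -> exists n, L n r.
Proof.
move: r; apply: (@pS_ind2 (fun r => exists n, L n r)) => r a l [s [Ss Ha]] Hl e.
have [n Hn] : exists n, L n (s * a) by case: Ha => [->|//]; exists 0%N.
have [N HN] : exists N, forall bx, bx \in l -> exists s, S s /\ L N (bx.1 * s).
  apply: (bound_list (Q := fun n bx => exists s, S s /\ L n (bx.1 * s))).
    by move=> n0 m x le [s0 [Ss0 h]]; exists s0; split=> //; apply: L_le h.
  move=> bx /Hl [s0 [Ss0 [h|[n0 h]]]]; last by exists n0, s0.
  by exists 0%N, s0.
exists (maxn n N).+1, a, l; split.
  by exists s; split=> //; apply: L_le Hn; apply: leq_maxl.
split=> // bx /HN [s0 [Ss0 h]]; exists s0; split=> //; apply: L_le h; apply: leq_maxr.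
Qed.

Lemma pS0 : pS S 0.
Proof.
apply: (@pS_intro _ _ 0 0 [::]); first by exists 1; split; [exact: S1|left; rewrite mulr0].
  by [].
by rewrite big_nil addr0.
Qed.

Lemma L_pS n r : L n r -> pS S r.
Proof.
elim: n r => [|n IH] r /=; first by move=> ->; exact: pS0.
move=> [a [l [[s [Ss Ha]] [Hl e]]]]; apply: (pS_intro (a := a) (l := l)) => //.
  by exists s; split=> //; right; apply: IH.
by move=> bx /Hl [s0 [Ss0 h]]; exists s0; split=> //; right; apply: IH.
Qed.

Lemma pS_add r r' : pS S r -> pS S r' -> pS S (r + r').
Proof.
move=> /pS_L [n Hn] /pS_L [m Hm]; apply: (@L_pS (maxn n m)); apply: L_add.
  by apply: L_le Hn; apply: leq_maxl.
by apply: L_le Hm; apply: leq_maxr.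
Qed.

Lemma pS_mull r x : pS S r -> pS S (x * r).
Proof. by move=> /pS_L [n Hn]; apply: (@L_pS n); apply: L_mull. Qed.
Lemma pS_mulr r y : pS S r -> pS S (r * y).
Proof. by move=> /pS_L [n Hn]; apply: (@L_pS n); apply: L_mulr. Qed.
Lemma pS_opp r : pS S r -> pS S (- r).
Proof. by move=> h; rewrite -mulN1r; apply: pS_mull. Qed.
Lemma pS_sub r r' : pS S r -> pS S r' -> pS S (r - r').
Proof. by move=> h h'; apply: pS_add => //; apply: pS_opp. Qed.

Lemma pS_canl s a : S s -> pS S (s * a) -> pS S a.
Proof.
move=> Ss h; apply: (pS_intro (a := a) (l := [::])).
- by exists s; split=> //; right.
- by [].
- by rewrite big_nil addr0.
Qed.

Lemma pS_canr s a : S s -> pS S (a * s) -> pS S a.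
Proof.
move=> Ss h; apply: (pS_intro (a := 0) (l := [:: (a, 1)])).
- by exists 1; split; [exact: S1|left; rewrite mulr0].
- by move=> bx; rewrite mem_seq1 => /eqP -> /=; exists s; split=> //; right.
- by rewrite big_cons big_nil /= mulr1 add0r addr0.
Qed.

Lemma pS_ker (B : pzRingType) (f : {rmorphism R -> B}) :
  inverts S f -> forall r, pS S r -> f r = 0.
Proof.
move=> inv; apply: pS_ind2 => r a l [s [Ss Ha]] Hl ->.
rewrite rmorphD rmorph_sum /=.
have -> : f a = 0.
  have [y [_ hy]] := inv _ Ss.
  have : f (s * a) = 0 by case: Ha => ->; rewrite ?rmorph0.
  by rewrite rmorphM => h; rewrite -[f a]mul1r -hy -mulrA h mulr0.
rewrite add0r big1_seq // => bx /andP [_ Hb]; rewrite rmorphM.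
have [s0 [Ss0 Hs0]] := Hl _ Hb.
have [y [hy _]] := inv _ Ss0.
have : f (bx.1 * s0) = 0 by case: Hs0 => ->; rewrite ?rmorph0.
by rewrite rmorphM => h; rewrite -[f bx.1]mulr1 -hy mulrA h mul0r mul0r.
Qed.

End PSideal.




Section Factor.
Variables (R A B : pzRingType) (I : R -> Prop) (pi : {rmorphism R -> A}).
Hypothesis Hq : quotient_map pi I.
Variable f : {rmorphism R -> B}.
Hypothesis fI : forall r, I r -> f r = 0.

Lemma factor_ex : exists phi : {rmorphism A -> B}, forall r, phi (pi r) = f r.
Proof.
pose lift (a : A) : R := projT1 (cid (proj1 Hq a)).
have liftK a : pi (lift a) = a by rewrite /lift; case: cid.
have key r r' : pi r = pi r' -> f r = f r'.
  move=> e; apply/eqP; rewrite -subr_eq0 -rmorphB; apply/eqP; apply: fI.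
  by apply/(proj2 Hq); rewrite rmorphB e subrr.
have H : ((f \o lift) 0 = 0 /\ {morph (f \o lift) : x y / x + y}) /\
         ((f \o lift) 1 = 1 /\ {morph (f \o lift) : x y / x * y}).
  split; split=> [|x y] /=.
  - by rewrite (key _ 0) ?rmorph0 ?liftK.
  - by rewrite -rmorphD; apply: key; rewrite rmorphD !liftK.
  - by rewrite (key _ 1) ?rmorph1 ?liftK.
  - by rewrite -rmorphM; apply: key; rewrite rmorphM !liftK.
exists (mkrm H) => r; rewrite mkrmE /=; apply: key; exact: liftK.
Qed.
End Factor.

Section Aquot.
Variables (R : pzRingType) (S : R -> Prop) (HS : left_ore S).

Definition EA (x y : R) := pS S (x - y).

Lemma A_setoid : setoid_ring EA 0 1 (@GRing.opp R) +%R *%R.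
Proof.
have refl x y : x = y -> EA x y by move=> ->; rewrite /EA subrr; exact: pS0.
split.
- by move=> x; apply: refl.
- by move=> x y h; rewrite /EA -opprB; apply: pS_opp.
- by move=> x y w h1 h2; rewrite /EA -[x](subrK y) -addrA; apply: pS_add.
- move=> x x' y y' h1 h2; rewrite /EA opprD addrACA; exact: pS_add.
- by move=> x x' h; rewrite /EA -opprD; apply: pS_opp.
- move=> x x' y y' h1 h2; rewrite /EA.
  have -> : x * y - x' * y' = (x - x') * y + x' * (y - y').
    by rewrite mulrBl mulrBr addrA subrK.
  by apply: pS_add => //; [apply: pS_mulr|apply: pS_mull].
- by move=> x y w; apply: refl; rewrite addrA.
- by move=> x y; apply: refl; rewrite addrC.
- by move=> x; apply: refl; rewrite add0r.
- by move=> x; apply: refl; rewrite addNr.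
- by move=> x y w; apply: refl; rewrite mulrA.
- by move=> x; apply: refl; rewrite mul1r.
- by move=> x; apply: refl; rewrite mulr1.
- by move=> x y w; apply: refl; rewrite mulrDl.
- by move=> x y w; apply: refl; rewrite mulrDr.
Qed.

Definition Arng : pzRingType := SQ A_setoid.

Lemma pi_ax : ((cls A_setoid) 0 = 0 /\ {morph (cls A_setoid) : x y / x + y}) /\
         ((cls A_setoid) 1 = 1 /\ {morph (cls A_setoid) : x y / x * y}).
Proof.
split; split=> [|x y] //.
- by rewrite cls_add.
- by rewrite cls_mul.
Qed.

Definition piA : {rmorphism R -> Arng} := mkrm pi_ax.

Lemma piA_quot : quotient_map piA (pS S).
Proof.
split.
  by move=> a; exists (rep a); rewrite mkrmE /= repK.
move=> r; rewrite mkrmE /= cls_zero eq_cls /EA subr0; done.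
Qed.

End Aquot.


Record regular_ore (A : pzRingType) (T : A -> Prop) : Prop := RegOre {
  ro_1 : T 1;
  ro_M : forall s t, T s -> T t -> T (s * t);
  ro_ore : forall r s, T s -> exists s' r', T s' /\ s' * r = r' * s;
  ro_regl : forall s a, T s -> s * a = 0 -> a = 0;
  ro_regr : forall s a, T s -> a * s = 0 -> a = 0
}.

Section Loc.
Variables (A : pzRingType) (T : A -> Prop) (HT : regular_ore T).

Let T1 := ro_1 HT.
Let TM := ro_M HT.
Let Tore := ro_ore HT.

Definition ore (r s : A) : A * A :=
  match pselect (exists p : A * A, T p.1 /\ p.1 * r = p.2 * s) with
  | left h => projT1 (cid h)
  | right _ => (1, 0)
  end.

Lemma oreP r s : T s -> T (ore r s).1 /\ (ore r s).1 * r = (ore r s).2 * s.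
Proof.
move=> Ts; rewrite /ore; case: pselect => [h|nh]; first by case: cid.
exfalso; apply: nh; have [s' [r' [Ts' e]]] := Tore r Ts; by exists (s', r').
Qed.

Lemma canr s x y : T s -> x * s = y * s -> x = y.
Proof.
move=> Ts e; apply/eqP; rewrite -subr_eq0; apply/eqP; apply: (ro_regr HT Ts).
by rewrite mulrBl e subrr.
Qed.

Lemma canl s x y : T s -> s * x = s * y -> x = y.
Proof.
move=> Ts e; apply/eqP; rewrite -subr_eq0; apply/eqP; apply: (ro_regl HT Ts).
by rewrite mulrBr e subrr.
Qed.

Definition Ep (p q : A * A) :=
  exists u v, u * p.1 = v * q.1 /\ T (u * p.1) /\ u * p.2 = v * q.2.

Definition addp (p q : A * A) : A * A :=
  let o := ore p.1 q.1 in (o.1 * p.1, o.1 * p.2 + o.2 * q.2).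
Definition mulp (p q : A * A) : A * A :=
  let o := ore p.2 q.1 in (o.1 * p.1, o.2 * q.2).

Lemma addp_T p q : T p.1 -> T q.1 -> T (addp p q).1.
Proof. by move=> Tp Tq; apply: TM => //; case: (oreP p.1 Tq). Qed.
Lemma mulp_T p q : T p.1 -> T q.1 -> T (mulp p q).1.
Proof. by move=> Tp Tq; apply: TM => //; case: (oreP p.2 Tq). Qed.

Lemma Ep_refl p : T p.1 -> Ep p p.
Proof. by move=> Tp; exists 1, 1; rewrite !mul1r. Qed.

Lemma Ep_sym p q : Ep p q -> Ep q p.
Proof. by move=> [u [v [e1 [Tu e2]]]]; exists v, u; rewrite -e1. Qed.

Lemma Ep_trans p q w : T q.1 -> Ep p q -> Ep q w -> Ep p w.
Proof.
case: p => s a; case: q => t b; case: w => p c.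
rewrite /Ep /= => Tt [u [v [e1 [Tus e2]]]] [u' [v' [e1' [Tut e2']]]].
have [s' [r' [Ts' e]]] := Tore (v * t) Tut.
have svr : s' * v = r' * u' by apply: (canr Tt); rewrite -!mulrA e.
exists (s' * u), (r' * v'); split; last split.
- by rewrite -!mulrA e1 e e1'.
- by rewrite -mulrA; apply: TM.
- by rewrite -!mulrA e2 mulrA svr -mulrA e2'.
Qed.

Lemma Ep_eq s a t b : T s -> s = t -> a = b -> Ep (s, a) (t, b).
Proof. by move=> Ts <- <-; apply: Ep_refl. Qed.

Lemma Ep_exp s a u : T (u * s) -> Ep (s, a) (u * s, u * a).
Proof. by move=> Tus; exists u, 1; rewrite !mul1r. Qed.

Lemma addp_any s a t b u v : T s -> T t -> u * s = v * t -> T (u * s) ->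
  Ep (addp (s, a) (t, b)) (u * s, u * a + v * b).
Proof.
move=> Ts Tt euv Tus; rewrite /addp /=.
move: (oreP s Tt); case: (ore s t) => u0 v0 /= [Tu0 e0].
have [p [q [Tp epq]]] := Tore (u0 * s) Tus.
exists p, q => /=; split; first exact: epq.
split; first by apply: TM => //; apply: TM.
have h1 : p * u0 = q * u by apply: (canr Ts); rewrite -!mulrA.
have h2 : p * v0 = q * v by apply: (canr Tt); rewrite -!mulrA -e0 epq euv.
by rewrite !mulrDr !mulrA h1 h2.
Qed.

Lemma mulp_any s a t b u a' : T s -> T t -> u * a = a' * t -> T (u * s) ->
  Ep (mulp (s, a) (t, b)) (u * s, a' * b).
Proof.
move=> Ts Tt euv Tus; rewrite /mulp /=.
move: (oreP a Tt); case: (ore a t) => u0 a0 /= [Tu0 e0].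
have [p [q [Tp epq]]] := Tore (u0 * s) Tus.
exists p, q => /=; split; first exact: epq.
split; first by apply: TM => //; apply: TM.
have h1 : p * u0 = q * u by apply: (canr Ts); rewrite -!mulrA.
have h2 : p * a0 = q * a' by apply: (canr Tt); rewrite -!mulrA -e0 -euv !mulrA h1.
by rewrite !mulrA h2.
Qed.

Lemma addp_comm x y : T x.1 -> T y.1 -> Ep (addp x y) (addp y x).
Proof.
case: x => s a; case: y => t b /= Ts Tt; have [u [v [Tu e]]] := Tore s Tt.
have Tus : T (u * s) by apply: TM.
have Tvt : T (v * t) by rewrite -e.
apply: (@Ep_trans _ (u * s, u * a + v * b)) => //; first exact: addp_any.
apply: (@Ep_trans _ (v * t, v * b + u * a)) => //.
  by apply: Ep_eq => //; rewrite addrC.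
by apply: Ep_sym; apply: addp_any.
Qed.

Lemma addp_cong_l x x' y : T x.1 -> T x'.1 -> T y.1 -> Ep x x' ->
  Ep (addp x y) (addp x' y).
Proof.
case: x => s a; case: x' => s1 a1; case: y => t b /=.
move=> Ts Ts1 Tt [p [q [/= e1 [Tw e2]]]].
have [al [be [Tal ea]]] := Tore (p * s) Tt.
have T1' : T (al * p * s) by rewrite -mulrA; apply: TM.
have T2' : T (al * q * s1) by rewrite -mulrA -e1 ?mulrA -?mulrA; apply: TM.
apply: (@Ep_trans _ (al * p * s, al * p * a + be * b)) => //.
  by apply: addp_any => //; rewrite -mulrA.
apply: (@Ep_trans _ (al * q * s1, al * q * a1 + be * b)) => //.
  by apply: Ep_eq => //; rewrite -!mulrA ?e1 ?e2.
by apply: Ep_sym; apply: addp_any => //; rewrite -mulrA -e1.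
Qed.

Lemma addp_cong_r x y y' : T x.1 -> T y.1 -> T y'.1 -> Ep y y' ->
  Ep (addp x y) (addp x y').
Proof.
move=> Ts Tt Tt1 h.
apply: (@Ep_trans _ (addp y x)); first by apply: addp_T.
  exact: addp_comm.
apply: (@Ep_trans _ (addp y' x)); first by apply: addp_T.
  exact: addp_cong_l.
exact: addp_comm.
Qed.

Lemma mulp_cong_l x x' y : T x.1 -> T x'.1 -> T y.1 -> Ep x x' ->
  Ep (mulp x y) (mulp x' y).
Proof.
case: x => s a; case: x' => s1 a1; case: y => t b /=.
move=> Ts Ts1 Tt [p [q [/= e1 [Tw e2]]]].
have [al [a2 [Tal ea]]] := Tore (p * a) Tt.
have T1' : T (al * p * s) by rewrite -mulrA; apply: TM.
have T2' : T (al * q * s1) by rewrite -mulrA -e1; apply: TM.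
apply: (@Ep_trans _ (al * p * s, a2 * b)) => //.
  by apply: mulp_any => //; rewrite -mulrA.
apply: (@Ep_trans _ (al * q * s1, a2 * b)) => //.
  by apply: Ep_eq => //; rewrite -!mulrA e1.
by apply: Ep_sym; apply: mulp_any => //; rewrite -mulrA -e2.
Qed.

Lemma mulp_cong_r x y y' : T x.1 -> T y.1 -> T y'.1 -> Ep y y' ->
  Ep (mulp x y) (mulp x y').
Proof.
case: x => s a; case: y => t b; case: y' => t1 b1 /=.
move=> Ts Tt Tt1 [p [q [/= e1 [Tw e2]]]].
have [al [c [Tal ea]]] := Tore a Tw.
have T1' : T (al * s) by apply: TM.
apply: (@Ep_trans _ (al * s, c * p * b)) => //.
  by apply: mulp_any => //; rewrite -mulrA.
apply: (@Ep_trans _ (al * s, c * q * b1)) => //.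
  by apply: Ep_eq => //; rewrite -!mulrA e2.
by apply: Ep_sym; apply: mulp_any => //; rewrite -mulrA -e1.
Qed.

Lemma addp_assoc s a t b p c : T s -> T t -> T p ->
  Ep (addp (s, a) (addp (t, b) (p, c))) (addp (addp (s, a) (t, b)) (p, c)).
Proof.
move=> Ts Tt Tp.
have [u [v [Tu e]]] := Tore s Tt.
have Tus : T (u * s) by apply: TM.
have [al [be [Tal ea]]] := Tore (u * s) Tp.
have Tavt : T (al * v * t) by rewrite -mulrA -e; apply: TM.
have Taus : T (al * u * s) by rewrite -mulrA; apply: TM.
have Taus' : T (al * (u * s)) by apply: TM.
apply: (@Ep_trans _ (addp (s, a) (al * v * t, al * v * b + be * c))).
  by apply: addp_T.
  apply: addp_cong_r => //; try by apply: addp_T.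
  by apply: addp_any => //; rewrite -mulrA -e.
apply: (@Ep_trans _ (al * u * s, al * u * a + 1 * (al * v * b + be * c))) => //.
  by apply: addp_any => //; rewrite mul1r -!mulrA e.
apply: (@Ep_trans _ (al * (u * s), al * (u * a + v * b) + be * c)) => //.
  by apply: Ep_eq; rewrite ?mulrA // mul1r mulrDr !mulrA addrA.
apply: (@Ep_trans _ (addp (u * s, u * a + v * b) (p, c))).
  by apply: addp_T.
  by apply: Ep_sym; apply: addp_any.
apply: Ep_sym; apply: addp_cong_l => //; try by apply: addp_T.
exact: addp_any.
Qed.

Lemma addp_0 s a : T s -> Ep (addp (1, 0) (s, a)) (s, a).
Proof.
move=> Ts; have T1s : T (s * 1) by rewrite mulr1.
apply: (@Ep_trans _ (s * 1, s * 0 + 1 * a)) => //.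
  by apply: addp_any => //; rewrite mulr1 mul1r.
by apply: Ep_eq; rewrite ?mulr1 ?mulr0 ?add0r ?mul1r.
Qed.

Lemma addp_N s a : T s -> Ep (addp (s, - a) (s, a)) (1, 0).
Proof.
move=> Ts; have T1s : T (1 * s) by rewrite mul1r.
apply: (@Ep_trans _ (1 * s, 1 * - a + 1 * a)) => //.
  exact: addp_any.
by exists 1, s; rewrite /= !mul1r mulr1 addNr mulr0.
Qed.

Lemma mulp_assoc s a t b p c : T s -> T t -> T p ->
  Ep (mulp (s, a) (mulp (t, b) (p, c))) (mulp (mulp (s, a) (t, b)) (p, c)).
Proof.
move=> Ts Tt Tp.
have [u1 [b' [Tu1 e1]]] := Tore b Tp.
have Tu1t : T (u1 * t) by apply: TM.
have [u2 [a2 [Tu2 e2]]] := Tore a Tu1t.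
have Tu2s : T (u2 * s) by apply: TM.
apply: (@Ep_trans _ (mulp (s, a) (u1 * t, b' * c))); first by apply: mulp_T.
  apply: mulp_cong_r => //; try by apply: mulp_T.
  exact: mulp_any.
apply: (@Ep_trans _ (u2 * s, a2 * (b' * c))) => //.
  exact: mulp_any.
apply: (@Ep_trans _ (1 * (u2 * s), a2 * b' * c)).
  by rewrite mul1r.
  by apply: Ep_eq; rewrite ?mul1r ?mulrA.
apply: (@Ep_trans _ (mulp (u2 * s, a2 * u1 * b) (p, c))); first by apply: mulp_T.
  apply: Ep_sym; apply: mulp_any => //; first by rewrite mul1r -!mulrA e1.
  by rewrite mul1r.
apply: Ep_sym; apply: mulp_cong_l => //; try by apply: mulp_T.
by apply: mulp_any => //; rewrite e2 !mulrA.
Qed.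

Lemma mulp_1l s a : T s -> Ep (mulp (1, 1) (s, a)) (s, a).
Proof.
move=> Ts; have T1s : T (s * 1) by rewrite mulr1.
apply: (@Ep_trans _ (s * 1, 1 * a)) => //.
  by apply: mulp_any => //; rewrite mulr1 mul1r.
by apply: Ep_eq; rewrite ?mulr1 ?mul1r.
Qed.

Lemma mulp_1r s a : T s -> Ep (mulp (s, a) (1, 1)) (s, a).
Proof.
move=> Ts; have T1s : T (1 * s) by rewrite mul1r.
apply: (@Ep_trans _ (1 * s, a * 1)) => //.
  by apply: mulp_any => //; rewrite mulr1 mul1r.
by apply: Ep_eq; rewrite ?mulr1 ?mul1r.
Qed.

Lemma mulp_Dl s a t b p c : T s -> T t -> T p ->
  Ep (mulp (addp (s, a) (t, b)) (p, c)) (addp (mulp (s, a) (p, c)) (mulp (t, b) (p, c))).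
Proof.
move=> Ts Tt Tp.
have [u [v [Tu e]]] := Tore s Tt.
have Tus : T (u * s) by apply: TM.
have [al [d [Tal ed]]] := Tore (u * a + v * b) Tp.
have Taus : T (al * (u * s)) by apply: TM.
have [be [e' [Tbe ee]]] := Tore (al * (u * a)) Tp.
have Tbaus : T (be * (al * (u * s))) by apply: TM.
have TM1 : T (be * al * u * s) by rewrite -!mulrA.
have TM2 : T (be * al * v * t) by rewrite -!mulrA -e.
apply: (@Ep_trans _ (mulp (u * s, u * a + v * b) (p, c))); first by apply: mulp_T.
  apply: mulp_cong_l => //; try by apply: addp_T.
  exact: addp_any.
apply: (@Ep_trans _ (al * (u * s), d * c)) => //.
  exact: mulp_any.
apply: (@Ep_trans _ (be * (al * (u * s)), be * (d * c))) => //.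
  exact: Ep_exp.
apply: (@Ep_trans _ (1 * (be * al * u * s), 1 * (e' * c) + 1 * ((be * d - e') * c))).
  by rewrite mul1r.
  by apply: Ep_eq; rewrite ?mul1r -?mulrA // -mulrDl addrC subrK mulrA.
apply: (@Ep_trans _ (addp (be * al * u * s, e' * c) (be * al * v * t, (be * d - e') * c))).
  by apply: addp_T.
  apply: Ep_sym; apply: addp_any => //; rewrite ?mul1r // -!mulrA e //.
apply: Ep_sym.
apply: (@Ep_trans _ (addp (be * al * u * s, e' * c) (mulp (t, b) (p, c)))).
  by apply: addp_T => //; apply: mulp_T.
  apply: addp_cong_l => //; try by apply: mulp_T.
  by apply: mulp_any => //; rewrite -!mulrA.
apply: addp_cong_r => //; try by apply: mulp_T.
apply: mulp_any => //.
by rewrite mulrBl -[be * d * p]mulrA -ed -ee !mulrDr addrAC subrr add0r !mulrA.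
Qed.

Lemma mulp_Dr s a t b p c : T s -> T t -> T p ->
  Ep (mulp (s, a) (addp (t, b) (p, c))) (addp (mulp (s, a) (t, b)) (mulp (s, a) (p, c))).
Proof.
move=> Ts Tt Tp.
have [u [v [Tu e]]] := Tore t Tp.
have Tut : T (u * t) by apply: TM.
have [al [d [Tal ed]]] := Tore a Tut.
have Tas : T (al * s) by apply: TM.
apply: (@Ep_trans _ (mulp (s, a) (u * t, u * b + v * c))); first by apply: mulp_T.
  apply: mulp_cong_r => //; try by apply: addp_T.
  exact: addp_any.
apply: (@Ep_trans _ (al * s, d * (u * b + v * c))) => //.
  exact: mulp_any.
apply: (@Ep_trans _ (1 * (al * s), 1 * (d * u * b) + 1 * (d * v * c))).
  by rewrite mul1r.
  by apply: Ep_eq; rewrite ?mul1r // mulrDr !mulrA.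
apply: (@Ep_trans _ (addp (al * s, d * u * b) (al * s, d * v * c))).
  by apply: addp_T.
  by apply: Ep_sym; apply: addp_any => //; rewrite mul1r.
apply: Ep_sym.
apply: (@Ep_trans _ (addp (al * s, d * u * b) (mulp (s, a) (p, c)))).
  by apply: addp_T => //; apply: mulp_T.
  apply: addp_cong_l => //; try by apply: mulp_T.
  by apply: mulp_any => //; rewrite -mulrA.
apply: addp_cong_r => //; try by apply: mulp_T.
by apply: mulp_any => //; rewrite ed -!mulrA e.
Qed.

Definition X := {p : A * A | T p.1}.
Definition EX (x y : X) := Ep (proj1_sig x) (proj1_sig y).
Definition zX : X := exist (fun p : A * A => T p.1) (1, 0) T1.
Definition oX : X := exist (fun p : A * A => T p.1) (1, 1) T1.
Definition oppX (x : X) : X :=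
  exist (fun p : A * A => T p.1) ((proj1_sig x).1, - (proj1_sig x).2) (proj2_sig x).
Definition addX (x y : X) : X :=
  exist (fun p : A * A => T p.1) (addp (proj1_sig x) (proj1_sig y)) (addp_T (proj2_sig x) (proj2_sig y)).
Definition mulX (x y : X) : X :=
  exist (fun p : A * A => T p.1) (mulp (proj1_sig x) (proj1_sig y)) (mulp_T (proj2_sig x) (proj2_sig y)).

Lemma Loc_setoid : setoid_ring EX zX oX oppX addX mulX.
Proof.
split; rewrite /EX.
- by case=> x Tx; apply: Ep_refl.
- by move=> x y; apply: Ep_sym.
- by move=> x [y Ty] w /=; apply: Ep_trans.
- move=> [x Tx] [x' Tx'] [y Ty] [y' Ty'] /= h1 h2.
  apply: (@Ep_trans _ (addp x' y)); first exact: addp_T.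
    exact: addp_cong_l.
  exact: addp_cong_r.
- move=> [[s a] Ts] [[s1 a1] Ts1] /= [u [v [e1 [Tw e2]]]].
  by exists u, v; rewrite /= !mulrN e2.
- move=> [x Tx] [x' Tx'] [y Ty] [y' Ty'] /= h1 h2.
  apply: (@Ep_trans _ (mulp x' y)); first exact: mulp_T.
    exact: mulp_cong_l.
  exact: mulp_cong_r.
- by move=> [[s a] Ts] [[t b] Tt] [[p c] Tp] /=; apply: addp_assoc.
- by move=> [[s a] Ts] [[t b] Tt] /=; apply: addp_comm.
- by move=> [[s a] Ts] /=; apply: addp_0.
- by move=> [[s a] Ts] /=; apply: addp_N.
- by move=> [[s a] Ts] [[t b] Tt] [[p c] Tp] /=; apply: mulp_assoc.
- by move=> [[s a] Ts] /=; apply: mulp_1l.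
- by move=> [[s a] Ts] /=; apply: mulp_1r.
- by move=> [[s a] Ts] [[t b] Tt] [[p c] Tp] /=; apply: mulp_Dl.
- by move=> [[s a] Ts] [[t b] Tt] [[p c] Tp] /=; apply: mulp_Dr.
Qed.

Definition Qrng : pzRingType := SQ Loc_setoid.
Definition gX (a : A) : X := exist (fun p : A * A => T p.1) (1, a) T1.
Definition g_fun (a : A) : Qrng := cls Loc_setoid (gX a).

Lemma g_ax : (g_fun 0 = 0 /\ {morph g_fun : x y / x + y}) /\
             (g_fun 1 = 1 /\ {morph g_fun : x y / x * y}).
Proof.
have T11 : T (1 * 1) by rewrite mul1r.
split; split=> [|x y] //.
- rewrite /g_fun cls_add; apply/eq_cls; rewrite /EX /=.
  apply: Ep_sym; apply: (@Ep_trans _ (1 * 1, 1 * x + 1 * y)) => //.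
    exact: addp_any.
  by apply: Ep_eq; rewrite ?mul1r.
- rewrite /g_fun cls_mul; apply/eq_cls; rewrite /EX /=.
  apply: Ep_sym; apply: (@Ep_trans _ (1 * 1, x * y)) => //.
    by apply: mulp_any => //; rewrite mul1r mulr1.
  by apply: Ep_eq; rewrite ?mul1r.
Qed.

Definition gQ : {rmorphism A -> Qrng} := mkrm g_ax.

Lemma gQ_frac (q : Qrng) : exists s a (u : Qrng),
  T s /\ u * gQ s = 1 /\ gQ s * u = 1 /\ q = u * gQ a.
Proof.
elim/clsP: q => [[[s a] Ts]]; simpl in Ts.
pose u : Qrng := cls Loc_setoid (exist (fun p : A * A => T p.1) (s, 1) Ts).
have T1s : T (1 * s) by rewrite mul1r.
have T11 : T (1 * 1) by rewrite mul1r.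
exists s, a, u; split=> //; split; last split.
- rewrite mkrmE /u /g_fun cls_mul cls_one; apply/eq_cls; rewrite /EX /=.
  apply: (@Ep_trans _ (1 * s, 1 * s)) => //; first exact: mulp_any.
  by exists 1, (1 * s); simpl; rewrite !mul1r !mulr1; split=> //; split=> //.
- rewrite mkrmE /u /g_fun cls_mul cls_one; apply/eq_cls; rewrite /EX /=.
  apply: (@Ep_trans _ (1 * 1, 1 * 1)) => //; first exact: mulp_any.
  by apply: Ep_eq; rewrite ?mul1r.
- rewrite mkrmE /u /g_fun cls_mul; apply/eq_cls; rewrite /EX /=.
  apply: Ep_sym; apply: (@Ep_trans _ (1 * s, 1 * a)) => //; first exact: mulp_any.
  by apply: Ep_eq; rewrite ?mul1r.
Qed.

Lemma gQ_inj a : gQ a = 0 -> a = 0.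
Proof.
rewrite mkrmE /g_fun cls_zero => /eq_cls [u [v [e1 [Tu e2]]]].
simpl in e1, e2, Tu.
have Tu' : T u by move: Tu; rewrite mulr1.
by apply: (ro_regl HT Tu'); rewrite e2 mulr0.
Qed.

Lemma gQ_unit s : T s -> is_unit (gQ s).
Proof.
move=> Ts; have [s' [a [u [_ [_ [_ _]]]]]] := gQ_frac 0.
pose v : Qrng := cls Loc_setoid (exist (fun p : A * A => T p.1) (s, 1) Ts).
have T1s : T (1 * s) by rewrite mul1r.
have T11 : T (1 * 1) by rewrite mul1r.
exists v; split.
- rewrite mkrmE /v /g_fun cls_mul cls_one; apply/eq_cls; rewrite /EX /=.
  apply: (@Ep_trans _ (1 * 1, 1 * 1)) => //; first exact: mulp_any.
  by apply: Ep_eq; rewrite ?mul1r.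
- rewrite mkrmE /v /g_fun cls_mul cls_one; apply/eq_cls; rewrite /EX /=.
  apply: (@Ep_trans _ (1 * s, 1 * s)) => //; first exact: mulp_any.
  by exists 1, (1 * s); simpl; rewrite !mul1r !mulr1; split=> //; split=> //.
Qed.

End Loc.


Section Univ.
Variables (A : pzRingType) (T : A -> Prop) (HT : regular_ore T).

Lemma Q_agree (B : pzRingType) (k1 k2 : {rmorphism Qrng HT -> B}) :
  (forall a, k1 (gQ HT a) = k2 (gQ HT a)) -> forall q, k1 q = k2 q.
Proof.
move=> hk q; have [s [a [u [Ts [hu1 [hu2 ->]]]]]] := gQ_frac (HT := HT) q.
rewrite !rmorphM hk; congr (_ * _).
have e1 : k1 u * k1 (gQ HT s) = 1 by rewrite -rmorphM hu1 rmorph1.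
have e2 : k2 (gQ HT s) * k2 u = 1 by rewrite -rmorphM hu2 rmorph1.
by rewrite -[LHS]mulr1 -e2 (mulrA (k1 u)) -hk e1 mul1r.
Qed.

Variables (B : pzRingType) (phi : {rmorphism A -> B}).
Hypothesis Hphi : forall t, T t -> is_unit (phi t).

Definition invB (y : B) : B :=
  match pselect (exists z, y * z = 1 /\ z * y = 1) with
  | left h => projT1 (cid h)
  | right _ => 0
  end.

Lemma invP y : is_unit y -> y * invB y = 1 /\ invB y * y = 1.
Proof. by move=> h; rewrite /invB; case: pselect => [h'|//]; case: cid. Qed.

Definition Hp (p : A * A) : B := invB (phi p.1) * phi p.2.

Lemma Hexp s a u : T s -> T (u * s) -> Hp (u * s, u * a) = Hp (s, a).
Proof.
move=> Ts Tus; rewrite /Hp /=.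
have [i1 i2] := invP (Hphi Tus); have [j1 j2] := invP (Hphi Ts).
have key : invB (phi (u * s)) * phi u = invB (phi s).
  by rewrite -[RHS]mul1r -i2 rmorphM -!mulrA j1 mulr1.
by rewrite (rmorphM phi u a) mulrA key.
Qed.

Lemma Hp_E p q : T p.1 -> T q.1 -> Ep T p q -> Hp p = Hp q.
Proof.
case: p => s a; case: q => t b /= Ts Tt [u [v [e1 [Tus e2]]]]; simpl in *.
have Tvt : T (v * t) by rewrite -e1.
by rewrite -(Hexp a Ts Tus) e1 e2 (Hexp b Tt Tvt).
Qed.

Lemma Hp_add s a t b : T s -> T t -> Hp (addp T (s, a) (t, b)) = Hp (s, a) + Hp (t, b).
Proof.
move=> Ts Tt; rewrite /addp /=.
move: (oreP HT s Tt); case: (ore T s t) => u v /= [Tu e].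
have Tus : T (u * s) by apply: (ro_M HT).
have Tvt : T (v * t) by rewrite -e.
have h1 := Hexp a Ts Tus; have h2 := Hexp b Tt Tvt.
rewrite /Hp /= in h1 h2 *.
by rewrite rmorphD mulrDr h1 e h2.
Qed.

Lemma Hp_mul s a t b : T s -> T t -> Hp (mulp T (s, a) (t, b)) = Hp (s, a) * Hp (t, b).
Proof.
move=> Ts Tt; rewrite /mulp /=.
move: (oreP HT a Tt); case: (ore T a t) => u a' /= [Tu e].
have Tus : T (u * s) by apply: (ro_M HT).
have [k1 k2] := invP (Hphi Tt).
rewrite -(Hexp a Ts Tus) /Hp /= e !rmorphM !mulrA.
by rewrite -[invB _ * _ * _ * _]mulrA k1 mulr1.
Qed.

Definition h_fun (q : Qrng HT) : B := Hp (proj1_sig (rep q)).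

Lemma h_cls x : h_fun (cls (Loc_setoid HT) x) = Hp (proj1_sig x).
Proof.
rewrite /h_fun; apply: (Hp_E (proj2_sig (rep (cls (Loc_setoid HT) x))) (proj2_sig x)).
exact: (rep_cls (Loc_setoid HT) x).
Qed.

Lemma h_ax : (h_fun 0 = 0 /\ {morph h_fun : x y / x + y}) /\
             (h_fun 1 = 1 /\ {morph h_fun : x y / x * y}).
Proof.
split; split.
- by rewrite cls_zero h_cls /Hp /= rmorph0 mulr0.
- elim/clsP=> -[[s a] Ts]; elim/clsP=> -[[t b] Tt].
  by rewrite cls_add !h_cls /=; apply: Hp_add.
- rewrite cls_one h_cls /Hp /= rmorph1 mulr1.
  have [h _] := invP (ex_intro _ 1 (conj (mulr1 1) (mulr1 1)) : is_unit (1 : B)).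
  by rewrite mul1r in h.
- elim/clsP=> -[[s a] Ts]; elim/clsP=> -[[t b] Tt].
  by rewrite cls_mul !h_cls /=; apply: Hp_mul.
Qed.

Lemma Q_univ : exists h : {rmorphism Qrng HT -> B},
  (forall a, phi a = h (gQ HT a)) /\
  (forall h' : {rmorphism Qrng HT -> B}, (forall a, phi a = h' (gQ HT a)) -> forall q, h' q = h q).
Proof.
have hg a : mkrm h_ax (gQ HT a) = phi a.
  rewrite mkrmE mkrmE /g_fun h_cls /Hp /= rmorph1.
  have [h _] := invP (ex_intro _ 1 (conj (mulr1 1) (mulr1 1)) : is_unit (1 : B)).
  by rewrite mul1r in h; rewrite h mul1r.
exists (mkrm h_ax); split=> [a|h' hh']; first by rewrite hg.
by apply: Q_agree => a; rewrite hg -hh'.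
Qed.

End Univ.


Lemma univ_iso (R Q1 Q2 : pzRingType) (S : R -> Prop)
  (f1 : {rmorphism R -> Q1}) (f2 : {rmorphism R -> Q2}) :
  inverts S f1 -> universal_inverting S f1 ->
  inverts S f2 -> universal_inverting S f2 -> ring_iso Q1 Q2.
Proof.
move=> I1 U1 I2 U2.
have [h [hf _]] := U1 _ f2 I2.
have [k [kf _]] := U2 _ f1 I1.
have [h0 [_ u1]] := U1 _ f1 I1.
have [k0 [_ u2]] := U2 _ f2 I2.
have kh : forall q, k (h q) = q.
  move=> q; pose c : {rmorphism Q1 -> Q1} := k \o h.
  have e1 : c q = h0 q by apply: u1 => r; rewrite /c /= -hf -kf.
  have e2 : idfun q = h0 q by apply: u1.
  by rewrite -[RHS]/(idfun q) e2 -e1.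
have hk : forall q, h (k q) = q.
  move=> q; pose c : {rmorphism Q2 -> Q2} := h \o k.
  have e1 : c q = k0 q by apply: u2 => r; rewrite /c /= -kf -hf.
  have e2 : idfun q = k0 q by apply: u2.
  by rewrite -[RHS]/(idfun q) e2 -e1.
by exists h; apply: (@Bijective _ _ _ k).
Qed.

Section Main.
Variables (R : pzRingType) (S : R -> Prop) (HS : left_ore S).

Local Notation pi := (piA HS).
Definition TA := image_p pi S.

Lemma pi_surj a : exists r, pi r = a.
Proof. exact: (proj1 (piA_quot HS)). Qed.
Lemma pi_ker r : pi r = 0 <-> pS S r.
Proof. exact: (proj2 (piA_quot HS)). Qed.

Lemma TA_reg : regular_ore TA.
Proof.
split.
- by exists 1; split; [exact: S1|rewrite rmorph1].
- move=> _ _ [s [Ss <-]] [t [St <-]]; exists (s * t); split; first exact: SM.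
  by rewrite rmorphM.
- move=> r _ [s [Ss <-]]; have [r0 <-] := pi_surj r.
  have [s' [r' [Ss' e]]] := Sore HS r0 Ss.
  exists (pi s'), (pi r'); split; first by exists s'.
  by rewrite -!rmorphM e.
- move=> _ a [s [Ss <-]]; have [a0 <-] := pi_surj a.
  by rewrite -rmorphM => /pi_ker h; apply/pi_ker; apply: pS_canl h.
- move=> _ a [s [Ss <-]]; have [a0 <-] := pi_surj a.
  by rewrite -rmorphM => /pi_ker h; apply/pi_ker; apply: pS_canr h.
Qed.

Definition Qm : pzRingType := Qrng TA_reg.
Definition fm : {rmorphism R -> Qm} := (gQ TA_reg \o pi : {rmorphism R -> Qm}).

Lemma fmE r : fm r = gQ TA_reg (pi r). Proof. by []. Qed.

Lemma fm_inverts : inverts S fm.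
Proof. by move=> s Ss; rewrite fmE; apply: gQ_unit; exists s. Qed.

Lemma fm_ker r : fm r = 0 <-> pS S r.
Proof.
split; first by rewrite fmE => /gQ_inj /pi_ker.
by move=> h; apply: (pS_ker fm_inverts).
Qed.

Lemma fm_univ : universal_inverting S fm.
Proof.
move=> Q' f' If'.
have [phi hphi] := factor_ex (piA_quot HS) (pS_ker If').
have Iphi : forall t, TA t -> is_unit (phi t).
  by move=> _ [s [Ss <-]]; rewrite hphi; apply: If'.
have [h [hh uh]] := Q_univ TA_reg Iphi.
exists h; split=> [r|h' hh']; first by rewrite -hphi hh.
apply: uh => a; have [r <-] := pi_surj a.
by rewrite hphi hh'.
Qed.

Lemma fm_nonzero : localizable S -> (1 : Qm) != 0.
Proof.
move=> [R' [phi Iphi]]; have [h [_ _]] := fm_univ Iphi.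
apply/eqP => e; have := rmorph1 h; rewrite e rmorph0 => /esym /eqP.
by rewrite oner_eq0.
Qed.

Lemma part5 (Hloc : localizable S) (A' : pzRingType) (pi' : {rmorphism R -> A'}) :
  quotient_map pi' (pS S) ->
  left_denominator (image_p pi' S) /\
  (forall a, ass (image_p pi' S) a -> a = 0) /\
  exists (L : pzRingType) (sigma : {rmorphism A' -> L}),
    is_left_localization (image_p pi' S) sigma /\ ring_iso Qm L.
Proof.
move=> Hq; have [surj ker] := Hq.
have nz := fm_nonzero Hloc.
have canl s a : S s -> pi' s * a = 0 -> a = 0.
  move=> Ss; have [a0 <-] := surj a; rewrite -rmorphM => /ker h.
  by apply/ker; apply: pS_canl h.
have canr s a : S s -> a * pi' s = 0 -> a = 0.
  move=> Ss; have [a0 <-] := surj a; rewrite -rmorphM => /ker h.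
  by apply/ker; apply: pS_canr h.
have T1 : image_p pi' S 1 by exists 1; split; [exact: S1|rewrite rmorph1].
have assz : forall a, ass (image_p pi' S) a -> a = 0.
  by move=> a [_ [[s [Ss <-]] e]]; apply: canl e.
split; [|split=> //].
  split; first split.
  - split=> //; split.
      move=> [s [Ss e]]; have /(pS_ker fm_inverts) fs0 : pS S s by apply/ker.
      have [y [hy _]] := fm_inverts Ss; move: hy; rewrite fs0 mul0r => hy.
      by move: nz; rewrite hy eqxx.
    move=> _ _ [s [Ss <-]] [t [St <-]]; exists (s * t); split; first exact: SM.
    by rewrite rmorphM.
  - move=> r _ [s [Ss <-]]; have [r0 <-] := surj r.
    have [s' [r' [Ss' e]]] := Sore HS r0 Ss.
    exists (pi' s'), (pi' r'); split; first by exists s'.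
    by rewrite -!rmorphM e.
  - move=> r _ [s [Ss <-]] e; exists 1; split=> //.
    by rewrite (canr _ _ Ss e) mulr0.
have [sigma hs] := factor_ex Hq (pS_ker fm_inverts).
exists Qm, sigma; split; last first.
  by exists idfun; apply: (@Bijective _ _ _ idfun).
split; [|split].
- by move=> _ [s [Ss <-]]; rewrite hs; apply: fm_inverts.
- move=> q; have [s [a [u [[s0 [Ss0 es]] [h1 [h2 ->]]]]]] := gQ_frac q.
  have [a0 ea] := pi_surj a.
  exists (pi' s0), (pi' a0), u; split; first by exists s0.
  by rewrite !hs !fmE es ea.
- move=> a; have [r <-] := surj a; rewrite hs fm_ker; split.
    move=> /(proj2 (ker r)) ->; exists 1; split=> //; exact: mulr0.
  by move=> /assz /ker.
Qed.

End Main.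

Theorem corollary3p16 (R : pzRingType) (S : R -> Prop)
    (HS : left_ore S) (Hloc : localizable S) :
  exists (Q : pzRingType) (f : {rmorphism R -> Q}),
    inverts S f /\ universal_inverting S f /\
    (forall (Q' : pzRingType) (f' : {rmorphism R -> Q'}),
        inverts S f' -> universal_inverting S f' -> ring_iso Q Q') /\
    (exists (A : pzRingType) (pi : {rmorphism R -> A}), quotient_map pi (pS S)) /\
    (forall (A : pzRingType) (pi : {rmorphism R -> A}), quotient_map pi (pS S) ->
        left_denominator (image_p pi S) /\
        (forall a, ass (image_p pi S) a -> a = 0) /\
        exists (L : pzRingType) (sigma : {rmorphism A -> L}),
          is_left_localization (image_p pi S) sigma /\ ring_iso Q L).
Proof.
exists (Qm HS), (fm HS); split; first exact: fm_inverts.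
split; first exact: fm_univ.
split.
  move=> Q' f' I' U'; exact: (univ_iso (fm_inverts HS) (fm_univ HS) I' U').
split; first by exists (Arng HS), (piA HS); exact: piA_quot.
move=> A pi hq; exact: part5.
Qed.
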